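(* Let $(A,\succ,\prec)$ be an anti-pre-Novikov algebra and $s=\sum_i a_i\otimes b_i\in A\otimes A$. For $\zeta,\eta\in A^*$: (a) $P(s):=s_{12}\circ s_{13}+s_{23}\odot s_{13}+s_{12}\prec s_{23}=0$ iff $T_{\tau(s)}(\zeta)\circ T_{\tau(s)}(\eta)=T_{\tau(s)}(L_{\odot}^*(T_s(\zeta))\eta+R_{\prec}^*(T_{\tau(s)}(\eta))\zeta)$ for all $\zeta,\eta$; (b) $P_1(s):=s_{12}\prec s_{13}-s_{13}\odot s_{23}+s_{12}\circ s_{23}=0$ iff $T_{\tau(s)}(\zeta)\prec T_{\tau(s)}(\eta)=T_{\tau(s)}(R_{\circ}^*(T_{\tau(s)}(\eta))\zeta-R_{\odot}^*(T_s(\zeta))\eta)$ for all $\zeta,\eta$; (c) $P_2(s):=s_{12}\succ s_{13}+s_{13}\star s_{23}-s_{12}\succ s_{23}=0$ iff $T_{\tau(s)}(\zeta)\succ T_{\tau(s)}(\eta)=T_{\tau(s)}(L_{\star}^*(T_s(\zeta))\eta-R_{\succ}^*(T_{\tau(s)}(\eta))\zeta)$ for all $\zeta,\eta$; (d) $P_3(s):=s_{13}\circ s_{23}-s_{13}\prec s_{12}-s_{12}\odot s_{23}=0$ iff $T_s(\zeta)\circ T_s(\eta)=T_s(-L_{\odot}^*(T_s(\zeta))\eta-R_{\prec}^*(T_{\tau(s)}(\eta))\zeta)$ for all $\zeta,\eta$; (e) $P_4(s):=s_{13}\circ s_{12}-s_{13}\prec s_{23}-s_{23}\odot s_{12}=0$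 iff $T_s(\zeta)\prec T_s(\eta)=T_s(R_{\odot}^*(T_s(\zeta))\eta-R_{\circ}^*(T_{\tau(s)}(\eta))\zeta)$ for all $\zeta,\eta$; (f) $P_5(s):=s_{12}\star s_{23}-s_{13}\succ s_{12}-s_{13}\succ s_{23}=0$ iff $T_s(\zeta)\succ T_s(\eta)=T_s(R_{\succ}^*(T_{\tau(s)}(\eta))\zeta-L_{\star}^*(T_s(\zeta))\eta)$ for all $\zeta,\eta$.
   Context: $A$ is finite-dimensional over a field $k$. An anti-pre-Novikov algebra is $(A,\succ,\prec)$ such that with $x\circ y=x\succ y+x\prec y$: $(x\circ y-y\circ x)\succ z=y\succ(x\succ z)-x\succ(y\succ z)$; $x\prec(y\circ z)=(y\succ x)\prec z-(x\prec y)\prec z-y\succ(x\prec z)$; $(x\circ y)\succ z=-(x\succ z)\prec y$; $(x\prec y)\prec z=(x\prec z)\prec y$; $(x\circ y-y\circ x)\prec z=x\succ(y\circ z)-y\succ(x\circ z)$. Further $x\odot y=x\succ y+y\prec x$, $x\star y=x\circ y+y\circ x$. For an operation $\ast$, $L_\ast(x)y=x\ast y$, $R_\ast(x)y=y\ast x$; $L_{\star}=L_{\circ}+R_{\circ}$, $L_{\odot}=L_{\succ}+R_{\prec}$, $R_{\odot}=R_{\succ}+L_{\prec}$. For $f:A\to\mathrm{End}(A)$, $f^*(x)\in\mathrm{End}(A^* )$ is given by $\langle f^*(x)\zeta,y\rangle=-\langle\zeta,f(x)y\rangle$. $\tau(x\otimes y)=y\otimes x$. $T_s:A^*\to A$ is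 defined by $\langle T_s(\zeta),\eta\rangle=\langle s,\zeta\otimes\eta\rangle$. Tensor notation, for $s=\sum_i a_i\otimes b_i$ and an operation $\ast$ (sums over $i,j$): $s_{12}\ast s_{13}=\sum a_i\ast a_j\otimes b_i\otimes b_j$; $s_{13}\ast s_{12}=\sum a_i\ast a_j\otimes b_j\otimes b_i$; $s_{12}\ast s_{23}=\sum a_i\otimes b_i\ast a_j\otimes b_j$; $s_{13}\ast s_{23}=\sum a_i\otimes a_j\otimes b_i\ast b_j$; $s_{23}\ast s_{13}=\sum a_j\otimes a_i\otimes b_i\ast b_j$; $s_{23}\ast s_{12}=\sum a_j\otimes a_i\ast b_j\otimes b_i$. (General rule: $s_{pq}$ places $a_i$ in tensor slot $p$ and $b_i$ in slot $q$; the product is taken in the common slot, with the factor from the left term on the left.) *)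

(* Defs.v *)
From HB Require Import structures.
From mathcomp Require Import all_boot all_order all_algebra.
Set Implicit Arguments. Unset Strict Implicit. Unset Printing Implicit Defensive.
Import GRing.Theory.
Local Open Scope ring_scope.

(* A finite-dimensional vector space over a field K is modelled as K^n,
   written as row vectors 'rV[K]_n; its dual A^* is also 'rV[K]_n with the
   canonical pairing <zeta, y> = \sum_i zeta_i y_i. *)
Section Defs.
Variables (K : fieldType) (n : nat).
Local Notation A := 'rV[K]_n.

Definition pair (zeta y : A) : K := \sum_(i < n) zeta 0 i * y 0 i.

Definition bilinear_op (op : A -> A -> A) : Prop :=
  (forall (a : K) (x y z : A), op (a *: x + y) z = a *: op x z + op y z) /\
  (forall (a : K) (x y z : A), op x (a *: y + z) = a *: op x y + op x z).

Definition circ (sc pc : A -> A -> A) x y := sc x y + pc x y.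
Definition odot (sc pc : A -> A -> A) x y := sc x y + pc y x.
Definition star (sc pc : A -> A -> A) x y := circ sc pc x y + circ sc pc y x.

Record antiPreNovikov := APN {
  sc : A -> A -> A;
  pc : A -> A -> A;
  sc_bilin : bilinear_op sc;
  pc_bilin : bilinear_op pc;
  apn1 : forall x y z, sc (circ sc pc x y - circ sc pc y x) z
                       = sc y (sc x z) - sc x (sc y z);
  apn2 : forall x y z, pc x (circ sc pc y z)
                       = pc (sc y x) z - pc (pc x y) z - sc y (pc x z);
  apn3 : forall x y z, sc (circ sc pc x y) z = - pc (sc x z) y;
  apn4 : forall x y z, pc (pc x y) z = pc (pc x z) y;
  apn5 : forall x y z, pc (circ sc pc x y - circ sc pc y x) z
                       = sc x (circ sc pc y z) - sc y (circ sc pc x z)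
}.

(* f : A -> End(A) given as a curried map; f^*(x) acting on A^* defined by
   <f^*(x) zeta, y> = - <zeta, f(x) y>, i.e. coordinatewise on the basis *)
Definition dualop (f : A -> A -> A) (x : A) (zeta : A) : A :=
  \row_(j < n) - pair zeta (f x (delta_mx 0 j)).

Definition Lop (op : A -> A -> A) : A -> A -> A := fun x y => op x y.
Definition Rop (op : A -> A -> A) : A -> A -> A := fun x y => op y x.

(* tensors s = \sum_i a_i (x) b_i, represented by the list of pairs (a_i,b_i) *)
Definition tau (s : seq (A * A)) : seq (A * A) := [seq (p.2, p.1) | p <- s].

(* <T_s zeta, eta> = <s, zeta (x) eta>, so T_s zeta = \sum_i <zeta,a_i> b_i *)
Definition Tmap (s : seq (A * A)) (zeta : A) : A :=
  \sum_(p <- s) pair zeta p.1 *: p.2.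

(* Coordinates (i,j,k) of elements of A (x) A (x) A = K^n (x) K^n (x) K^n *)
Definition t3 (x y z : A) (i j k : 'I_n) : K := x 0 i * y 0 j * z 0 k.

Definition s12_s13 op (s : seq (A * A)) i j k : K :=
  \sum_(p <- s) \sum_(q <- s) t3 (op p.1 q.1) p.2 q.2 i j k.
Definition s13_s12 op (s : seq (A * A)) i j k : K :=
  \sum_(p <- s) \sum_(q <- s) t3 (op p.1 q.1) q.2 p.2 i j k.
Definition s12_s23 op (s : seq (A * A)) i j k : K :=
  \sum_(p <- s) \sum_(q <- s) t3 p.1 (op p.2 q.1) q.2 i j k.
Definition s13_s23 op (s : seq (A * A)) i j k : K :=
  \sum_(p <- s) \sum_(q <- s) t3 p.1 q.1 (op p.2 q.2) i j k.
Definition s23_s13 op (s : seq (A * A)) i j k : K :=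
  \sum_(p <- s) \sum_(q <- s) t3 q.1 p.1 (op p.2 q.2) i j k.
Definition s23_s12 op (s : seq (A * A)) i j k : K :=
  \sum_(p <- s) \sum_(q <- s) t3 q.1 (op p.1 q.2) p.2 i j k.

Definition P0 (N : antiPreNovikov) s i j k :=
  s12_s13 (circ (sc N) (pc N)) s i j k + s23_s13 (odot (sc N) (pc N)) s i j k
  + s12_s23 (pc N) s i j k.
Definition P1 (N : antiPreNovikov) s i j k :=
  s12_s13 (pc N) s i j k - s13_s23 (odot (sc N) (pc N)) s i j k
  + s12_s23 (circ (sc N) (pc N)) s i j k.
Definition P2 (N : antiPreNovikov) s i j k :=
  s12_s13 (sc N) s i j k + s13_s23 (star (sc N) (pc N)) s i j k
  - s12_s23 (sc N) s i j k.
Definition P3 (N : antiPreNovikov) s i j k :=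
  s13_s23 (circ (sc N) (pc N)) s i j k - s13_s12 (pc N) s i j k
  - s12_s23 (odot (sc N) (pc N)) s i j k.
Definition P4 (N : antiPreNovikov) s i j k :=
  s13_s12 (circ (sc N) (pc N)) s i j k - s13_s23 (pc N) s i j k
  - s23_s12 (odot (sc N) (pc N)) s i j k.
Definition P5 (N : antiPreNovikov) s i j k :=
  s12_s23 (star (sc N) (pc N)) s i j k - s13_s12 (sc N) s i j k
  - s13_s23 (sc N) s i j k.

Definition tensor_zero (T : 'I_n -> 'I_n -> 'I_n -> K) : Prop :=
  forall i j k, T i j k = 0.

End Defs.

(* Main.v *)
Require Import Defs.
From mathcomp Require Import all_boot all_order all_algebra ring.
Import GRing.Theory.
Local Open Scope ring_scope.
Set Implicit Arguments. Unset Strict Implicit.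

Section H.
Variables (K : fieldType) (n : nat).
Local Notation A := 'rV[K]_n.
Implicit Types x y z u v : A.

Lemma pairC x y : pair x y = pair y x.
Proof. by apply: eq_bigr => i _; rewrite mulrC. Qed.
Lemma pairDr z x y : pair z (x + y) = pair z x + pair z y.
Proof. by rewrite /pair -big_split; apply: eq_bigr => i _; rewrite mxE mulrDr. Qed.
Lemma pairZr z a x : pair z (a *: x) = a * pair z x.
Proof. by rewrite /pair mulr_sumr; apply: eq_bigr => i _; rewrite mxE mulrCA. Qed.
Lemma pair0r z : pair z 0 = 0.
Proof. by rewrite /pair big1 // => i _; rewrite mxE mulr0. Qed.
Lemma pairNr z x : pair z (- x) = - pair z x.
Proof. by rewrite -scaleN1r pairZr mulN1r. Qed.
Lemma pairBr z x y : pair z (x - y) = pair z x - pair z y.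
Proof. by rewrite pairDr pairNr. Qed.
Lemma pair_sumr (T : Type) z (r : seq T) (F : T -> A) :
  pair z (\sum_(p <- r) F p) = \sum_(p <- r) pair z (F p).
Proof. elim: r => [|p r IH]; by rewrite ?big_nil ?pair0r // !big_cons pairDr IH. Qed.
Lemma pairDl z x y : pair (x + y) z = pair x z + pair y z.
Proof. by rewrite pairC pairDr !(pairC z). Qed.
Lemma pairZl z a x : pair (a *: x) z = a * pair x z.
Proof. by rewrite pairC pairZr pairC. Qed.
Lemma pairNl z x : pair (- x) z = - pair x z.
Proof. by rewrite pairC pairNr pairC. Qed.
Lemma pairBl z x y : pair (x - y) z = pair x z - pair y z.
Proof. by rewrite pairDl pairNl. Qed.
Lemma pair_delta x i : pair (delta_mx 0 i) x = x 0 i.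
Proof.
rewrite /pair (bigD1 i) //= big1 ?addr0 => [|j ji]; first by rewrite mxE !eqxx mul1r.
by rewrite mxE (negbTE ji) andbF mul0r.
Qed.

Definition lin (g : A -> A) := forall a u v, g (a *: u + v) = a *: g u + g v.
Section Lin.
Variable g : A -> A.
Hypothesis hg : lin g.
Lemma lin0 : g 0 = 0.
Proof. have h := hg 1 0 0; rewrite !scale1r addr0 in h. by apply: (@addrI _ (g 0)); rewrite addr0 -h. Qed.
Lemma linD u v : g (u + v) = g u + g v.
Proof. by have := hg 1 u v; rewrite !scale1r. Qed.
Lemma linZ a u : g (a *: u) = a *: g u.
Proof. by have := hg a u 0; rewrite !addr0 lin0 addr0. Qed.
Lemma linN u : g (- u) = - g u.
Proof. by rewrite -scaleN1r linZ scaleN1r. Qed.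
Lemma linB u v : g (u - v) = g u - g v.
Proof. by rewrite linD linN. Qed.
Lemma lin_sum (T : Type) (r : seq T) (F : T -> A) :
  g (\sum_(p <- r) F p) = \sum_(p <- r) g (F p).
Proof. elim: r => [|p r IH]; by rewrite ?big_nil ?lin0 // !big_cons linD IH. Qed.
Lemma lin_sumo (F : 'I_n -> A) :
  g (\sum_(j < n) F j) = \sum_(j < n) g (F j).
Proof. by rewrite -big_enum lin_sum big_enum. Qed.
End Lin.

Lemma dualopE (f : A -> A -> A) x zeta y : lin (f x) ->
  pair (dualop f x zeta) y = - pair zeta (f x y).
Proof.
move=> hl; have -> : f x y = f x (\sum_(j < n) y 0 j *: delta_mx 0 j) by rewrite -row_sum_delta.
rewrite (lin_sumo hl) -big_enum pair_sumr big_enum /= -sumrN [LHS]/pair.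
apply: eq_bigr => j _; rewrite (linZ hl) pairZr mxE mulNr mulrC.
by [].
Qed.

Section Op.
Variable op : A -> A -> A.
Hypothesis hop : bilinear_op op.
Lemma linl y : lin (fun u => op u y). Proof. by move=> a u v; case: hop => h _; apply: h. Qed.
Lemma linr x : lin (op x). Proof. by move=> a u v; case: hop => _ h; apply: h. Qed.
Lemma opsuml (T : Type) (r : seq T) (F : T -> A) y :
  op (\sum_(p <- r) F p) y = \sum_(p <- r) op (F p) y.
Proof. exact: (lin_sum (linl y)). Qed.
Lemma opsumr (T : Type) (r : seq T) (F : T -> A) x :
  op x (\sum_(p <- r) F p) = \sum_(p <- r) op x (F p).
Proof. exact: (lin_sum (linr x)). Qed.
Lemma opZl a u y : op (a *: u) y = a *: op u y. Proof. exact: (linZ (linl y)). Qed.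
Lemma opZr a u x : op x (a *: u) = a *: op x u. Proof. exact: (linZ (linr x)). Qed.
Lemma opDl u v y : op (u + v) y = op u y + op v y. Proof. exact: (linD (linl y)). Qed.
Lemma opDr u v x : op x (u + v) = op x u + op x v. Proof. exact: (linD (linr x)). Qed.
Lemma opNl u y : op (- u) y = - op u y. Proof. exact: (linN (linl y)). Qed.
Lemma opNr u x : op x (- u) = - op x u. Proof. exact: (linN (linr x)). Qed.
End Op.

Definition F3 (T : 'I_n -> 'I_n -> 'I_n -> K) x y z : K :=
  \sum_(i < n) \sum_(j < n) \sum_(k < n) x 0 i * y 0 j * z 0 k * T i j k.

Lemma F3_t3 a b c x y z : F3 (t3 a b c) x y z = pair x a * pair y b * pair z c.
Proof.
rewrite /F3 /pair.
have H1 i j : \sum_(k < n) x 0 i * y 0 j * z 0 k * t3 a b c i j k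
   = (x 0 i * a 0 i) * (y 0 j * b 0 j) * \sum_(k < n) z 0 k * c 0 k.
  by rewrite mulr_sumr; apply: eq_bigr => k _; rewrite /t3; ring.
under eq_bigr => i _ do under eq_bigr => j _ do rewrite H1.
have H2 i : \sum_(j < n) (x 0 i * a 0 i) * (y 0 j * b 0 j) * \sum_(k < n) z 0 k * c 0 k
   = (x 0 i * a 0 i) * (\sum_(j < n) y 0 j * b 0 j) * \sum_(k < n) z 0 k * c 0 k.
  by rewrite -mulr_suml -mulr_sumr.
under eq_bigr => i _ do rewrite H2.
by rewrite -!mulr_suml.
Qed.

Lemma F3_D T1 T2 x y z : F3 (fun i j k => T1 i j k + T2 i j k) x y z = F3 T1 x y z + F3 T2 x y z.
Proof.
rewrite /F3 -big_split; apply: eq_bigr => i _; rewrite -big_split; apply: eq_bigr => j _.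
rewrite -big_split; apply: eq_bigr => k _; by rewrite mulrDr.
Qed.
Lemma F3_B T1 T2 x y z : F3 (fun i j k => T1 i j k - T2 i j k) x y z = F3 T1 x y z - F3 T2 x y z.
Proof.
rewrite /F3 -sumrB; apply: eq_bigr => i _; rewrite -sumrB; apply: eq_bigr => j _.
rewrite -sumrB; apply: eq_bigr => k _; by rewrite mulrBr.
Qed.
Lemma F3_N T x y z : F3 (fun i j k => - T i j k) x y z = - F3 T x y z.
Proof.
rewrite /F3 -sumrN; apply: eq_bigr => i _; rewrite -sumrN; apply: eq_bigr => j _.
rewrite -sumrN; apply: eq_bigr => k _; by rewrite mulrN.
Qed.
Lemma F3_sum (T : Type) (r : seq T) (G : T -> 'I_n -> 'I_n -> 'I_n -> K) x y z :
  F3 (fun i j k => \sum_(p <- r) G p i j k) x y z = \sum_(p <- r) F3 (G p) x y z.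
Proof.
elim: r => [|p r IH]; rewrite ?big_nil.
  by rewrite /F3 big1 // => i _; rewrite big1 // => j _; rewrite big1 // => k _; rewrite big_nil mulr0.
rewrite big_cons -IH -F3_D /F3; apply: eq_bigr => i _; apply: eq_bigr => j _; apply: eq_bigr => k _.
by rewrite big_cons.
Qed.
Lemma F3_dsum (s : seq (A * A)) (a b c : A * A -> A * A -> A) x y z :
  F3 (fun i j k => \sum_(p <- s) \sum_(q <- s) t3 (a p q) (b p q) (c p q) i j k) x y z =
  \sum_(p <- s) \sum_(q <- s) pair x (a p q) * pair y (b p q) * pair z (c p q).
Proof.
rewrite (F3_sum s (fun p i j k => \sum_(q <- s) t3 (a p q) (b p q) (c p q) i j k)).
apply: eq_bigr => p _; rewrite (F3_sum s (fun q i j k => t3 (a p q) (b p q) (c p q) i j k)).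
by apply: eq_bigr => q _; rewrite F3_t3.
Qed.

Lemma sum_delta (G : 'I_n -> K) i : \sum_(i' < n) (delta_mx 0 i : A) 0 i' * G i' = G i.
Proof.
rewrite (bigD1 i) //= big1 ?addr0 => [|i' ni]; first by rewrite mxE !eqxx mul1r.
by rewrite mxE (negbTE ni) andbF mul0r.
Qed.

Lemma tzP T : tensor_zero T <-> forall x y z, F3 T x y z = 0.
Proof.
split=> [h x y z | h i j k].
  by rewrite /F3 big1 // => i _; rewrite big1 // => j _; rewrite big1 // => k _; rewrite h mulr0.
have := h (delta_mx 0 i) (delta_mx 0 j) (delta_mx 0 k).
have E i' j' k' : (delta_mx 0 i : A) 0 i' * (delta_mx 0 j : A) 0 j' * (delta_mx 0 k : A) 0 k' * T i' j' k'
  = (delta_mx 0 i : A) 0 i' * ((delta_mx 0 j : A) 0 j' * ((delta_mx 0 k : A) 0 k' * T i' j' k')) by ring.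
rewrite /F3.
under eq_bigr => i' _ do under eq_bigr => j' _ do under eq_bigr => k' _ do rewrite E.
under eq_bigr => i' _ do under eq_bigr => j' _ do rewrite -mulr_sumr -mulr_sumr sum_delta.
under eq_bigr => i' _ do rewrite -mulr_sumr sum_delta.
by rewrite sum_delta.
Qed.

Lemma veqP u v : u = v <-> forall w, pair w u = pair w v.
Proof.
split=> [->//|h]; apply/rowP => i.
by have := h (delta_mx 0 i); rewrite !pair_delta => ->.
Qed.
End H.

Section M.
Variables (K : fieldType) (n : nat) (N : antiPreNovikov K n).
Local Notation A := 'rV[K]_n.
Local Notation sc := (sc N). Local Notation pc := (pc N).
Local Notation ci := (circ sc pc). Local Notation od := (odot sc pc).
Local Notation st := (star sc pc).

Lemma sc_b : bilinear_op sc. Proof. exact: sc_bilin. Qed.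
Lemma pc_b : bilinear_op pc. Proof. exact: pc_bilin. Qed.
Lemma ci_b : bilinear_op ci.
Proof. split=> a x y z; rewrite /circ ?(opZl sc_b, opZr sc_b, opZl pc_b, opZr pc_b, opDl sc_b, opDr sc_b, opDl pc_b, opDr pc_b) scalerDr; rewrite addrACA //. Qed.
Lemma od_b : bilinear_op od.
Proof. split=> a x y z; rewrite /odot ?(opZl sc_b, opZr sc_b, opZl pc_b, opZr pc_b, opDl sc_b, opDr sc_b, opDl pc_b, opDr pc_b) scalerDr; rewrite addrACA //. Qed.
Lemma st_b : bilinear_op st.
Proof.
split=> a x y z; rewrite /star [in RHS]scalerDr.
  by rewrite (opDl ci_b) (opDr ci_b) (opZl ci_b) (opZr ci_b) addrACA.
by rewrite (opDl ci_b) (opDr ci_b) (opZl ci_b) (opZr ci_b) addrACA.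
Qed.

Lemma dualL op (hop : bilinear_op op) (x zeta y : A) : pair (dualop (Lop op) x zeta) y = - pair zeta (op x y).
Proof. by rewrite dualopE //; apply: linr. Qed.
Lemma dualR op (hop : bilinear_op op) (x zeta y : A) : pair (dualop (Rop op) x zeta) y = - pair zeta (op y x).
Proof. by rewrite dualopE //; apply: (linl hop). Qed.

Lemma TmapD (r : seq (A*A)) x y : Tmap r (x + y) = Tmap r x + Tmap r y.
Proof. by rewrite /Tmap -big_split; apply: eq_bigr => p _; rewrite pairDl scalerDl. Qed.
Lemma TmapN (r : seq (A*A)) x : Tmap r (- x) = - Tmap r x.
Proof. by rewrite /Tmap -sumrN; apply: eq_bigr => p _; rewrite pairNl scaleNr. Qed.
Lemma TmapB (r : seq (A*A)) x y : Tmap r (x - y) = Tmap r x - Tmap r y.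
Proof. by rewrite TmapD TmapN. Qed.

Lemma XC (s : seq (A*A)) (F : A*A -> A*A -> K) :
  \sum_(p <- s) \sum_(q <- s) F p q = \sum_(q <- s) \sum_(p <- s) F p q.
Proof. exact: exchange_big. Qed.

Lemma sD (r : seq (A*A)) (F G : A*A -> K) :
  \sum_(i <- r) (F i + G i) = \sum_(i <- r) F i + \sum_(i <- r) G i.
Proof. exact: big_split. Qed.

Section G.
Variable op : A -> A -> A.
Hypothesis hop : bilinear_op op.
Lemma G1 (r r' : seq (A*A)) (a b chi : A) :
  pair chi (op (Tmap r a) (Tmap r' b)) =
  \sum_(p <- r) \sum_(q <- r') pair a p.1 * pair b q.1 * pair chi (op p.2 q.2).
Proof.
rewrite /Tmap (opsuml hop) pair_sumr; apply: eq_bigr => p _.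
rewrite (opZl hop) (opsumr hop) pairZr pair_sumr mulr_sumr; apply: eq_bigr => q _.
rewrite (opZr hop) pairZr; ring.
Qed.
Lemma GL (r r' : seq (A*A)) (a b chi : A) :
  pair chi (Tmap r (dualop (Lop op) (Tmap r' a) b)) =
  - \sum_(p <- r) \sum_(q <- r') pair a q.1 * pair chi p.2 * pair b (op q.2 p.1).
Proof.
rewrite {1}/Tmap pair_sumr -sumrN; apply: eq_bigr => p _.
rewrite pairZr (dualL hop) /Tmap (opsuml hop) pair_sumr mulNr mulr_suml; congr (- _).
apply: eq_bigr => q _; rewrite (opZl hop) pairZr; ring.
Qed.
Lemma GR (r r' : seq (A*A)) (a b chi : A) :
  pair chi (Tmap r (dualop (Rop op) (Tmap r' a) b)) =
  - \sum_(p <- r) \sum_(q <- r') pair a q.1 * pair chi p.2 * pair b (op p.1 q.2).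
Proof.
rewrite {1}/Tmap pair_sumr -sumrN; apply: eq_bigr => p _.
rewrite pairZr (dualR hop) /Tmap (opsumr hop) pair_sumr mulNr mulr_suml; congr (- _).
apply: eq_bigr => q _; rewrite (opZr hop) pairZr; ring.
Qed.
Lemma G1x (r r' : seq (A*A)) (a b chi : A) :
  pair chi (op (Tmap r a) (Tmap r' b)) =
  \sum_(q <- r') \sum_(p <- r) pair a p.1 * pair b q.1 * pair chi (op p.2 q.2).
Proof. by rewrite G1 exchange_big. Qed.
Lemma GLx (r r' : seq (A*A)) (a b chi : A) :
  pair chi (Tmap r (dualop (Lop op) (Tmap r' a) b)) =
  - \sum_(q <- r') \sum_(p <- r) pair a q.1 * pair chi p.2 * pair b (op q.2 p.1).
Proof. by rewrite GL exchange_big. Qed.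
Lemma GRx (r r' : seq (A*A)) (a b chi : A) :
  pair chi (Tmap r (dualop (Rop op) (Tmap r' a) b)) =
  - \sum_(q <- r') \sum_(p <- r) pair a q.1 * pair chi p.2 * pair b (op p.1 q.2).
Proof. by rewrite GR exchange_big. Qed.
End G.

Lemma DS1 (s r : seq (A*A)) (F : A*A -> A*A -> K) :
  \sum_(p <- tau s) \sum_(q <- r) F p q = \sum_(p <- s) \sum_(q <- r) F (p.2, p.1) q.
Proof. by rewrite /tau big_map. Qed.
Lemma DS2 (s r : seq (A*A)) (F : A*A -> A*A -> K) :
  \sum_(p <- r) \sum_(q <- tau s) F p q = \sum_(p <- r) \sum_(q <- s) F p (q.2, q.1).
Proof. by apply: eq_bigr => p _; rewrite /tau big_map. Qed.

Lemma F3_s12s13 op (s : seq (A*A)) (x y z : A) : F3 (s12_s13 op s) x y z =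
  \sum_(p <- s) \sum_(q <- s) pair x (op p.1 q.1) * pair y (p.2) * pair z (q.2).
Proof. exact: (F3_dsum s (fun p q => op p.1 q.1) (fun p q => p.2) (fun p q => q.2)). Qed.
Lemma F3_s13s12 op (s : seq (A*A)) (x y z : A) : F3 (s13_s12 op s) x y z =
  \sum_(p <- s) \sum_(q <- s) pair x (op p.1 q.1) * pair y (q.2) * pair z (p.2).
Proof. exact: (F3_dsum s (fun p q => op p.1 q.1) (fun p q => q.2) (fun p q => p.2)). Qed.
Lemma F3_s12s23 op (s : seq (A*A)) (x y z : A) : F3 (s12_s23 op s) x y z =
  \sum_(p <- s) \sum_(q <- s) pair x (p.1) * pair y (op p.2 q.1) * pair z (q.2).
Proof. exact: (F3_dsum s (fun p q => p.1) (fun p q => op p.2 q.1) (fun p q => q.2)). Qed.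
Lemma F3_s13s23 op (s : seq (A*A)) (x y z : A) : F3 (s13_s23 op s) x y z =
  \sum_(p <- s) \sum_(q <- s) pair x (p.1) * pair y (q.1) * pair z (op p.2 q.2).
Proof. exact: (F3_dsum s (fun p q => p.1) (fun p q => q.1) (fun p q => op p.2 q.2)). Qed.
Lemma F3_s23s13 op (s : seq (A*A)) (x y z : A) : F3 (s23_s13 op s) x y z =
  \sum_(p <- s) \sum_(q <- s) pair x (q.1) * pair y (p.1) * pair z (op p.2 q.2).
Proof. exact: (F3_dsum s (fun p q => q.1) (fun p q => p.1) (fun p q => op p.2 q.2)). Qed.
Lemma F3_s23s12 op (s : seq (A*A)) (x y z : A) : F3 (s23_s12 op s) x y z =
  \sum_(p <- s) \sum_(q <- s) pair x (q.1) * pair y (op p.1 q.2) * pair z (p.2).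
Proof. exact: (F3_dsum s (fun p q => q.1) (fun p q => op p.1 q.2) (fun p q => p.2)). Qed.

Ltac G1s := rewrite ?(G1 sc_b, G1 pc_b, G1 ci_b); rewrite ?(TmapD, TmapN, TmapB, pairDr, pairNr, pairBr).
Ltac G2s := rewrite ?DS1 ?DS2 /=.
Ltac F3s := rewrite ?F3_D ?F3_B ?F3_N ?(F3_s12s13, F3_s13s12, F3_s12s23, F3_s13s23, F3_s23s13, F3_s23s12).
Ltac fin := apply/eqP; rewrite -subr_eq0; apply/eqP;
  rewrite -?(sumrN, sumrB, sD); apply: big1 => p _;
  rewrite -?(sumrN, sumrB, sD); apply: big1 => q _; ring.
Ltac insp := rewrite /P0 /P1 /P2 /P3 /P4 /P5; rewrite ?(G1 sc_b, G1 pc_b, G1 ci_b, G1 od_b, G1 st_b); rewrite ?(TmapD, TmapN, TmapB, pairDr, pairNr, pairBr); rewrite ?(GL sc_b, GL pc_b, GL ci_b, GL od_b, GL st_b) ?(GR sc_b, GR pc_b, GR ci_b, GR od_b, GR st_b); G2s; F3s; match goal with |- ?g => idtac g end.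

Lemma stC x y : st x y = st y x.
Proof. by rewrite /star addrC. Qed.

Ltac fin2 tac := apply/eqP; rewrite -subr_eq0; apply/eqP;
  rewrite -?(sumrN, sumrB, sD); apply: big1 => p _;
  rewrite -?(sumrN, sumrB, sD); apply: big1 => q _; tac; ring.

Lemma keyA (s : seq (A*A)) (zeta eta chi : A) :
  pair chi (ci (Tmap (tau s) zeta) (Tmap (tau s) eta))
  - pair chi (Tmap (tau s) (dualop (Lop od) (Tmap s zeta) eta + dualop (Rop pc) (Tmap (tau s) eta) zeta))
  = F3 (P0 N s) chi zeta eta.
Proof.
G1s. rewrite (GLx od_b) (GR pc_b). G2s. rewrite /P0. F3s. fin.
Qed.

Lemma keyB (s : seq (A*A)) (zeta eta chi : A) :
  pair chi (pc (Tmap (tau s) zeta) (Tmap (tau s) eta))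
  - pair chi (Tmap (tau s) (dualop (Rop ci) (Tmap (tau s) eta) zeta - dualop (Rop od) (Tmap s zeta) eta))
  = F3 (P1 N s) chi zeta eta.
Proof. rewrite /P1. rewrite ?(G1 pc_b); rewrite ?(TmapD, TmapN, TmapB, pairDr, pairNr, pairBr). rewrite (GR ci_b) (GR od_b). G2s. F3s. fin. Qed.

Lemma keyC (s : seq (A*A)) (zeta eta chi : A) :
  pair chi (sc (Tmap (tau s) zeta) (Tmap (tau s) eta))
  - pair chi (Tmap (tau s) (dualop (Lop st) (Tmap s zeta) eta - dualop (Rop sc) (Tmap (tau s) eta) zeta))
  = F3 (P2 N s) chi zeta eta.
Proof. rewrite /P2. G1s. rewrite (GL st_b) (GR sc_b). G2s. F3s. fin2 ltac:(rewrite [st q.2 p.2]stC). Qed.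
Lemma keyD (s : seq (A*A)) (zeta eta chi : A) :
  pair chi (ci (Tmap s zeta) (Tmap s eta))
  - pair chi (Tmap s (- dualop (Lop od) (Tmap s zeta) eta - dualop (Rop pc) (Tmap (tau s) eta) zeta))
  = F3 (P3 N s) zeta eta chi.
Proof. rewrite /P3. G1s. rewrite (GLx od_b) (GR pc_b). G2s. F3s. fin. Qed.
Lemma keyE (s : seq (A*A)) (zeta eta chi : A) :
  pair chi (pc (Tmap s zeta) (Tmap s eta))
  - pair chi (Tmap s (dualop (Rop od) (Tmap s zeta) eta - dualop (Rop ci) (Tmap (tau s) eta) zeta))
  = - F3 (P4 N s) zeta eta chi.
Proof. rewrite /P4. G1s. rewrite (GR od_b) (GR ci_b). G2s. F3s. fin. Qed.
Lemma keyF (s : seq (A*A)) (zeta eta chi : A) :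
  pair chi (sc (Tmap s zeta) (Tmap s eta))
  - pair chi (Tmap s (dualop (Rop sc) (Tmap (tau s) eta) zeta - dualop (Lop st) (Tmap s zeta) eta))
  = - F3 (P5 N s) zeta eta chi.
Proof. rewrite /P5. G1s. rewrite (GR sc_b) (GLx st_b). G2s. F3s. fin. Qed.
End M.

Unset Implicit Arguments. Set Strict Implicit.

Theorem mainTheorem6 (K : fieldType) (n : nat) (N : antiPreNovikov K n)
    (s : seq ('rV[K]_n * 'rV[K]_n)) :
  let sc := sc N in let pc := pc N in
  let ci := circ sc pc in let od := odot sc pc in let st := star sc pc in
  let Ts := Tmap s in let Tt := Tmap (tau s) in
  (* (a) *)
  (tensor_zero (P0 N s) <->
     forall zeta eta : 'rV[K]_n,
       ci (Tt zeta) (Tt eta)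
       = Tt (dualop (Lop od) (Ts zeta) eta + dualop (Rop pc) (Tt eta) zeta)) /\
  (* (b) *)
  (tensor_zero (P1 N s) <->
     forall zeta eta : 'rV[K]_n,
       pc (Tt zeta) (Tt eta)
       = Tt (dualop (Rop ci) (Tt eta) zeta - dualop (Rop od) (Ts zeta) eta)) /\
  (* (c) *)
  (tensor_zero (P2 N s) <->
     forall zeta eta : 'rV[K]_n,
       sc (Tt zeta) (Tt eta)
       = Tt (dualop (Lop st) (Ts zeta) eta - dualop (Rop sc) (Tt eta) zeta)) /\
  (* (d) *)
  (tensor_zero (P3 N s) <->
     forall zeta eta : 'rV[K]_n,
       ci (Ts zeta) (Ts eta)
       = Ts (- dualop (Lop od) (Ts zeta) eta - dualop (Rop pc) (Tt eta) zeta)) /\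
  (* (e) *)
  (tensor_zero (P4 N s) <->
     forall zeta eta : 'rV[K]_n,
       pc (Ts zeta) (Ts eta)
       = Ts (dualop (Rop od) (Ts zeta) eta - dualop (Rop ci) (Tt eta) zeta)) /\
  (* (f) *)
  (tensor_zero (P5 N s) <->
     forall zeta eta : 'rV[K]_n,
       sc (Ts zeta) (Ts eta)
       = Ts (dualop (Rop sc) (Tt eta) zeta - dualop (Lop st) (Ts zeta) eta)).
Proof.
cbv zeta.
split; [|split; [|split; [|split; [|split]]]].
- split=> [/tzP H zeta eta | H].
    by apply/veqP => chi; apply/eqP; rewrite -subr_eq0 keyA H.
  by apply/tzP => x y z; have := keyA N s y z x; rewrite H subrr => <-.
- split=> [/tzP H zeta eta | H].
    by apply/veqP => chi; apply/eqP; rewrite -subr_eq0 keyB H.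
  by apply/tzP => x y z; have := keyB N s y z x; rewrite H subrr => <-.
- split=> [/tzP H zeta eta | H].
    by apply/veqP => chi; apply/eqP; rewrite -subr_eq0 keyC H.
  by apply/tzP => x y z; have := keyC N s y z x; rewrite H subrr => <-.
- split=> [/tzP H zeta eta | H].
    by apply/veqP => chi; apply/eqP; rewrite -subr_eq0 keyD H.
  by apply/tzP => x y z; have := keyD N s x y z; rewrite H subrr => <-.
- split=> [/tzP H zeta eta | H].
    by apply/veqP => chi; apply/eqP; rewrite -subr_eq0 keyE H oppr0.
  apply/tzP => x y z; have := keyE N s x y z; rewrite H subrr => /eqP.
  by rewrite eq_sym oppr_eq0 => /eqP.
- split=> [/tzP H zeta eta | H].
    by apply/veqP => chi; apply/eqP; rewrite -subr_eq0 keyF H oppr0.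
  apply/tzP => x y z; have := keyF N s x y z; rewrite H subrr => /eqP.
  by rewrite eq_sym oppr_eq0 => /eqP.
Qed.
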